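(* Let $N\equiv 3\pmod 4$ be a prime and let $h_1,h_2,c_1,c_2,c_4\in\mathbb Z$ with $4c_1c_4-c_2^2\not\equiv 0\pmod N$. Let $a,b$ be arbitrary integers coprime to $N$, and let $L(c_1,c_2,c_4,h_1,h_2)$ denote the number of triples $d_1,d_2,d_4\pmod N$ satisfying \[ h_1\equiv a(d_1+d_4),\qquad (d_1d_4-d_2^2)h_2\equiv b(d_4c_1-d_2c_2+d_1c_4),\qquad d_1d_4-d_2^2\not\equiv 0\pmod N. \] Then \[ L(c_1,c_2,c_4,h_1,h_2)=\delta_{h_1\equiv h_2\equiv 0\ (\mathrm{mod}\ N)}\,\delta_{c_1\equiv c_4,\ c_2\equiv 0\ (\mathrm{mod}\ N)}\,N^2+\mathcal O(N), \] where $\delta_{\cdot}$ is $1$ if the indicated condition holds and $0$ otherwise, and the implied constant is absolute. *)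

(* Defs.v *)
From mathcomp Require Import all_boot all_order all_algebra.
Set Implicit Arguments. Unset Strict Implicit. Unset Printing Implicit Defensive.
Import Order.TTheory GRing.Theory Num.Theory.
Local Open Scope ring_scope.

Definition Lcond (N : nat) (a b h1 h2 c1 c2 c4 d1 d2 d4 : int) : bool :=
  [&& (h1 == a * (d1 + d4) %[mod N%:Z])%Z,
      ((d1 * d4 - d2 ^+ 2) * h2 == b * (d4 * c1 - d2 * c2 + d1 * c4) %[mod N%:Z])%Z
    & (d1 * d4 - d2 ^+ 2 != 0 %[mod N%:Z])%Z].

Definition Lcount (N : nat) (a b h1 h2 c1 c2 c4 : int) : nat :=
  #|[set d : 'I_N * 'I_N * 'I_N |
      Lcond N a b h1 h2 c1 c2 c4 (d.1.1 : nat)%:Z (d.1.2 : nat)%:Z (d.2 : nat)%:Z]|.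

Definition Ldelta (N : nat) (h1 h2 c1 c2 c4 : int) : nat :=
  [&& (h1 == 0 %[mod N%:Z])%Z, (h2 == 0 %[mod N%:Z])%Z,
      (c1 == c4 %[mod N%:Z])%Z & (c2 == 0 %[mod N%:Z])%Z].

(* Main.v *)
Require Import Defs.
From mathcomp Require Import all_boot all_order all_algebra.
From mathcomp Require Import ring zify.
Import Order.TTheory GRing.Theory Num.Theory.
Set Implicit Arguments. Unset Strict Implicit.
Local Open Scope ring_scope.

Lemma card_fib (T : finType) (N : nat) (S : {set T}) (p : T -> 'I_N) :
 (forall x y z, x \in S -> y \in S -> z \in S -> p x = p y -> p x = p z ->
    x = y \/ y = z \/ z = x) -> (#|S| <= 2 * N)%N.
Proof.
move=> H; rewrite -sum1_card (partition_big p predT) //=.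
apply: leq_trans (_ : (\sum_(j : 'I_N) 2 <= _)%N); last by rewrite sum_nat_const card_ord mulnC.
apply: leq_sum => j _.
have -> : (\sum_(i in S | p i == j) 1 = #|[set i in S | p i == j]|)%N.
  by rewrite -sum1_card; apply: eq_bigl => i; rewrite inE.
rewrite leqNgt; apply/negP => /card_gt2P [x [y [z [[]]]]].
rewrite !inE => /andP[xS /eqP px] /andP[yS /eqP py] /andP[zS /eqP pz] [nxy nyz nzx].
have := H x y z xS yS zS; rewrite px py pz => /(_ erefl erefl).
by case=> [/eqP|[/eqP|/eqP]]; [rewrite (negbTE nxy)|rewrite (negbTE nyz)|rewrite (negbTE nzx)].
Qed.

Lemma primeM (N : nat) (x y : int) : prime N ->
  (N%:Z %| x * y)%Z -> (N%:Z %| x)%Z \/ (N%:Z %| y)%Z.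
Proof. by move=> pN; rewrite !dvdzE abszM Euclid_dvdM // => /orP. Qed.

Lemma coprimeD (N : nat) (a x : int) : coprimez a N%:Z ->
  (N%:Z %| a * x)%Z -> (N%:Z %| x)%Z.
Proof. by move=> ca; rewrite Gauss_dvdzr // coprimez_sym. Qed.

Lemma ordD (N : nat) (i j : 'I_N) : (N%:Z %| i%:Z - j%:Z)%Z -> i = j.
Proof.
rewrite -eqz_mod_dvd !modz_nat => /eqP [] e; apply/val_inj.
by rewrite /= -(modn_small (ltn_ord i)) e modn_small.
Qed.

Lemma quad3 (N : nat) (A B u v w : int) : prime N ->
  (N%:Z %| A * u ^+ 2 + B * u - (A * v ^+ 2 + B * v))%Z ->
  (N%:Z %| A * u ^+ 2 + B * u - (A * w ^+ 2 + B * w))%Z ->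
  ~ (N%:Z %| u - v)%Z -> ~ (N%:Z %| u - w)%Z -> ~ (N%:Z %| v - w)%Z ->
  (N%:Z %| A)%Z /\ (N%:Z %| B)%Z.
Proof.
move=> pN h1 h2 n1 n2 n3.
have e1 : A * u ^+ 2 + B * u - (A * v ^+ 2 + B * v) = (u - v) * (A * (u + v) + B) by ring.
have e2 : A * u ^+ 2 + B * u - (A * w ^+ 2 + B * w) = (u - w) * (A * (u + w) + B) by ring.
rewrite e1 in h1; rewrite e2 in h2.
have {h1}h1 : (N%:Z %| A * (u + v) + B)%Z by case: (primeM pN h1).
have {h2}h2 : (N%:Z %| A * (u + w) + B)%Z by case: (primeM pN h2).
have h3 : (N%:Z %| A * (v - w))%Z.
  have -> : A * (v - w) = (A * (u + v) + B) - (A * (u + w) + B) by ring.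
  by rewrite rpredB.
have hA : (N%:Z %| A)%Z by case: (primeM pN h3).
split=> //.
have -> : B = (A * (u + v) + B) - A * (u + v) by ring.
by rewrite rpredB // dvdz_mulr.
Qed.

Notation T3 N := ('I_N * 'I_N * 'I_N)%type.
Notation zz i := ((i : nat)%:Z).

Lemma Lcond_dv N a b h1 h2 c1 c2 c4 x1 x2 x4 :
  Lcond N a b h1 h2 c1 c2 c4 x1 x2 x4 =
  [&& (N%:Z %| h1 - a * (x1 + x4))%Z,
      (N%:Z %| (x1 * x4 - x2 ^+ 2) * h2 - b * (x4 * c1 - x2 * c2 + x1 * c4))%Z
    & ~~ (N%:Z %| x1 * x4 - x2 ^+ 2)%Z].
Proof. by rewrite /Lcond !eqz_mod_dvd subr0. Qed.

Lemma neq_comp N (x y : T3 N) : x.1.1 = y.1.1 -> x.2 = y.2 -> x != y ->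
  ~ (N%:Z %| zz x.1.2 - zz y.1.2)%Z.
Proof.
move=> e1 e2 ne /ordD e3; move: ne; case: x e1 e2 e3 => [[? ?] ?]; case: y => [[? ?] ?] /=.
by move=> -> -> ->; rewrite eqxx.
Qed.

Lemma fib3 N (x y z : T3 N) (A B : int) (E : T3 N -> int) : prime N ->
  x.1.1 = y.1.1 -> x.1.1 = z.1.1 -> x.2 = y.2 -> x.2 = z.2 ->
  (N%:Z %| E x)%Z -> (N%:Z %| E y)%Z -> (N%:Z %| E z)%Z ->
  (forall w : T3 N, w.1.1 = x.1.1 -> w.2 = x.2 ->
      E x - E w = A * (zz x.1.2) ^+ 2 + B * zz x.1.2 - (A * (zz w.1.2) ^+ 2 + B * zz w.1.2)) ->
  x = y \/ y = z \/ z = x \/ ((N%:Z %| A)%Z /\ (N%:Z %| B)%Z).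
Proof.
move=> pN e1 e2 e3 e4 Ex Ey Ez HE.
case: (eqVneq x y) => [->|nxy]; first by left.
case: (eqVneq y z) => [->|nyz]; first by right; left.
case: (eqVneq z x) => [->|nzx]; first by right; right; left.
right; right; right.
apply: (quad3 (u := zz x.1.2) (v := zz y.1.2) (w := zz z.1.2) pN).
- by rewrite -HE // rpredB.
- by rewrite -HE // rpredB.
- exact: neq_comp.
- by apply: neq_comp; rewrite // eq_sym.
- by apply: neq_comp; rewrite -?e1 -?e2 -?e3 -?e4.
Qed.

Lemma sum_diff (N : nat) (a h1 x1 x4 y1 y4 : int) : coprimez a N%:Z ->
  (N%:Z %| h1 - a * (x1 + x4))%Z -> (N%:Z %| h1 - a * (y1 + y4))%Z ->
  (N%:Z %| (x1 - y1) + (x4 - y4))%Z.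
Proof.
move=> ca hx hy; apply: (coprimeD ca).
have -> : a * ((x1 - y1) + (x4 - y4)) = (h1 - a * (y1 + y4)) - (h1 - a * (x1 + x4)) by ring.
by rewrite rpredB.
Qed.

Lemma same4 (N : nat) (a h1 : int) (x y : T3 N) : coprimez a N%:Z ->
  (N%:Z %| h1 - a * (zz x.1.1 + zz x.2))%Z -> (N%:Z %| h1 - a * (zz y.1.1 + zz y.2))%Z ->
  x.1.1 = y.1.1 -> x.2 = y.2.
Proof.
move=> ca hx hy e; have := sum_diff ca hx hy; rewrite e subrr add0r; exact: ordD.
Qed.

Definition negI (N : nat) (Npos : (0 < N)%N) (i : 'I_N) : 'I_N :=
  Ordinal (ltn_pmod (N - i) Npos).

Lemma negI_dv (N : nat) (Npos : (0 < N)%N) (i : 'I_N) :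
  (N%:Z %| zz i + zz (negI Npos i))%Z.
Proof.
rewrite /negI /= -modz_nat -subzn; last exact: ltnW.
set m := (N%:Z - zz i).
have -> : zz i + (m %% N%:Z)%Z = (1 - (m %/ N%:Z)%Z) * N%:Z.
  have e : (m %% N%:Z)%Z = m - (m %/ N%:Z)%Z * N%:Z.
    by rewrite {2}(divz_eq m N%:Z); ring.
  by rewrite e /m; ring.
by rewrite dvdz_mull.
Qed.

Ltac dvd := repeat (first [ assumption | apply: dvdz_mull; assumption
  | apply: dvdz_mulr; assumption | apply: rpredB | apply: rpredD | apply: rpredN | apply: dvdz_mull ]).

Theorem lemma8 :
  exists C : nat,
  forall (N : nat) (h1 h2 c1 c2 c4 a b : int),
    prime N -> (N %% 4 = 3)%N ->
    (4 * c1 * c4 - c2 ^+ 2 != 0 %[mod N%:Z])%Z ->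
    coprimez a N%:Z -> coprimez b N%:Z ->
    (`| (Lcount N a b h1 h2 c1 c2 c4)%:Z
         - (Ldelta N h1 h2 c1 c2 c4 * N ^ 2)%N%:Z | <= (C * N)%N%:Z).
Proof.
exists 2%N => N h1 h2 c1 c2 c4 a b pN _ hc ca cb.
have Npos : (0 < N)%N := prime_gt0 pN.
rewrite eqz_mod_dvd subr0 in hc.
rewrite /Lcount; set S := [set _ | _].
have inS : forall d : T3 N, d \in S = [&& (N%:Z %| h1 - a * (zz d.1.1 + zz d.2))%Z,
      (N%:Z %| (zz d.1.1 * zz d.2 - zz d.1.2 ^+ 2) * h2
         - b * (zz d.2 * c1 - zz d.1.2 * c2 + zz d.1.1 * c4))%Z
    & ~~ (N%:Z %| zz d.1.1 * zz d.2 - zz d.1.2 ^+ 2)%Z].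
  by move=> d; rewrite inE Lcond_dv.
rewrite /Ldelta !eqz_mod_dvd !subr0.
set D := [&& _, _, _ & _].
case HD0: D; last first.
  have HD : ~~ D by rewrite HD0.
  rewrite mul0n; suff : (#|S| <= 2 * N)%N by lia.
  case: (boolP ((N%:Z %| h2)%Z && (N%:Z %| c2)%Z)) => [/andP[H2 C2] | H2C2].
    case: (boolP (N%:Z %| c4 - c1)%Z) => C41.
      have H1 : ~~ (N%:Z %| h1)%Z.
        apply/negP => H1; move/negP: HD; apply; rewrite /D H1 H2 C2 /=.
        by rewrite andbT -opprB rpredN.
      apply: (card_fib (p := fun d : T3 N => d.1.1)) => x y z' xS _ _ _ _; exfalso.
      move: xS; rewrite inS => /and3P[hx ex _].
      have e1 : (N%:Z %| b * (zz x.2 * c1 + zz x.1.1 * c4))%Z.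
        have -> : b * (zz x.2 * c1 + zz x.1.1 * c4) =
          (zz x.1.1 * zz x.2 - zz x.1.2 ^+ 2) * h2
           - ((zz x.1.1 * zz x.2 - zz x.1.2 ^+ 2) * h2
              - b * (zz x.2 * c1 - zz x.1.2 * c2 + zz x.1.1 * c4))
           + (b * zz x.1.2) * c2 by ring.
        by dvd.
      have e2 := coprimeD cb e1.
      have e3 : (N%:Z %| c1 * (zz x.1.1 + zz x.2))%Z.
        have -> : c1 * (zz x.1.1 + zz x.2) = (zz x.2 * c1 + zz x.1.1 * c4)
           - zz x.1.1 * (c4 - c1) by ring.
        by dvd.
      case: (primeM pN e3) => [Pc1 | Ps].
        move/negP: hc; apply.
        have -> : 4 * c1 * c4 - c2 ^+ 2 = (4 * c4) * c1 - c2 * c2 by ring.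
        by dvd.
      move/negP: H1; apply.
      have -> : h1 = (h1 - a * (zz x.1.1 + zz x.2)) + a * (zz x.1.1 + zz x.2) by ring.
      by dvd.
    apply: (card_fib (p := fun d : T3 N => d.1.2)) => x y z' xS yS _ /= e _; left.
    move: xS yS; rewrite !inS => /and3P[hx ex _] /and3P[hy ey _].
    have s := sum_diff ca hx hy.
    rewrite e in ex.
    have e1 : (N%:Z %| b * ((zz x.2 - zz y.2) * c1 + (zz x.1.1 - zz y.1.1) * c4))%Z.
      have -> : b * ((zz x.2 - zz y.2) * c1 + (zz x.1.1 - zz y.1.1) * c4) =
        ((zz x.1.1 * zz x.2 - zz y.1.2 ^+ 2) - (zz y.1.1 * zz y.2 - zz y.1.2 ^+ 2)) * h2
        - (((zz x.1.1 * zz x.2 - zz y.1.2 ^+ 2) * h2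
              - b * (zz x.2 * c1 - zz y.1.2 * c2 + zz x.1.1 * c4))
          - ((zz y.1.1 * zz y.2 - zz y.1.2 ^+ 2) * h2
              - b * (zz y.2 * c1 - zz y.1.2 * c2 + zz y.1.1 * c4))) by ring.
      by dvd.
    have e2 := coprimeD cb e1.
    have e3 : (N%:Z %| (zz x.1.1 - zz y.1.1) * (c4 - c1))%Z.
      have -> : (zz x.1.1 - zz y.1.1) * (c4 - c1) =
         ((zz x.2 - zz y.2) * c1 + (zz x.1.1 - zz y.1.1) * c4)
         - c1 * ((zz x.1.1 - zz y.1.1) + (zz x.2 - zz y.2)) by ring.
      by dvd.
    have e11 : x.1.1 = y.1.1.
      by case: (primeM pN e3) => [/ordD // | C]; rewrite C in C41.
    have e4 := same4 ca hx hy e11.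
    by move: e e11 e4; case: x {hx ex e1 e2 e3 s} => [[? ?] ?]; case: y {hy ey} => [[? ?] ?] /= -> -> ->.
  apply: (card_fib (p := fun d : T3 N => d.1.1)) => x y z' xS yS zS /= e1 e2.
  move: xS yS zS; rewrite !inS => /and3P[hx ex _] /and3P[hy ey _] /and3P[hz ez _].
  have e3 := same4 ca hx hy e1; have e4 := same4 ca hx hz e2.
  have := fib3 (A := - h2) (B := b * c2)
    (E := fun d : T3 N => (zz d.1.1 * zz d.2 - zz d.1.2 ^+ 2) * h2
         - b * (zz d.2 * c1 - zz d.1.2 * c2 + zz d.1.1 * c4)) pN e1 e2 e3 e4 ex ey ez.
  case.
    by move=> w /= -> ->; ring.
    by move=> ->; left.
  case=> [-> | [-> | [PA PB]]].
  - by right; left.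
  - by right; right.
  move/negP: H2C2; case; rewrite -[h2]opprK rpredN PA /=.
  exact: coprimeD cb PB.
move: HD0; rewrite /D => /and4P[H1 H2 C14 C2].
set f := fun u : 'I_N * 'I_N => (u, negI Npos u.1) : T3 N.
set Tt := f @: [set: 'I_N * 'I_N].
have cT : #|Tt| = (N * N)%N.
  rewrite card_imset; first by rewrite cardsT card_prod card_ord.
  by move=> u v [].
have memT : forall d : T3 N, (d \in Tt) = (N%:Z %| zz d.1.1 + zz d.2)%Z.
  move=> d; apply/imsetP/idP.
    by case=> u _ ->; exact: negI_dv.
  move=> H; exists d.1; first by rewrite inE.
  case: d H => [[d1 d2] d4] /= H; congr pair; apply: ordD.
  have -> : zz d4 - zz (negI Npos d1) = (zz d1 + zz d4) - (zz d1 + zz (negI Npos d1)) by ring.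
  by have := negI_dv Npos d1; dvd.
have SsubT : S \subset Tt.
  apply/subsetP => d; rewrite inS memT => /and3P[hd _ _]; apply: (coprimeD ca).
  have -> : a * (zz d.1.1 + zz d.2) = h1 - (h1 - a * (zz d.1.1 + zz d.2)) by ring.
  by dvd.
set Bad := [set d in Tt | (N%:Z %| zz d.1.1 * zz d.2 - zz d.1.2 ^+ 2)%Z].
have TsubSB : Tt \subset S :|: Bad.
  apply/subsetP => d dT; rewrite in_setU.
  case: (boolP (N%:Z %| zz d.1.1 * zz d.2 - zz d.1.2 ^+ 2)%Z) => hD.
    by rewrite orbC inE dT hD.
  have hs : (N%:Z %| zz d.1.1 + zz d.2)%Z by rewrite -memT.
  rewrite inS hD andbT; apply/orP; left; apply/andP; split.
    by dvd.
  have -> : (zz d.1.1 * zz d.2 - zz d.1.2 ^+ 2) * h2 -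
     b * (zz d.2 * c1 - zz d.1.2 * c2 + zz d.1.1 * c4) =
     (zz d.1.1 * zz d.2 - zz d.1.2 ^+ 2) * h2 -
     b * (c1 * (zz d.1.1 + zz d.2) - zz d.1.2 * c2 - zz d.1.1 * (c1 - c4)) by ring.
  by dvd.
have cB : (#|Bad| <= 2 * N)%N.
  apply: (card_fib (p := fun d : T3 N => d.1.1)) => x y z' xB yB zB /= e1 e2.
  move: xB yB zB; rewrite !inE => /andP[xT xD] /andP[yT yD] /andP[zT zD].
  have same : forall w : T3 N, w \in Tt -> w.1.1 = x.1.1 -> w.2 = x.2.
    move=> w wT ew; apply: ordD.
    have -> : zz w.2 - zz x.2 = (zz w.1.1 + zz w.2) - (zz x.1.1 + zz x.2) by rewrite ew; ring.
    by rewrite !memT in wT xT; dvd.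
  have e3 := esym (same y yT (esym e1)); have e4 := esym (same z' zT (esym e2)).
  have := fib3 (A := -1) (B := 0)
    (E := fun d : T3 N => zz d.1.1 * zz d.2 - zz d.1.2 ^+ 2) pN e1 e2 e3 e4 xD yD zD.
  case.
    by move=> w /= -> ->; ring.
    by move=> ->; left.
  case=> [-> | [-> | [PA PB]]].
  - by right; left.
  - by right; right.
  move: PA; rewrite rpredN dvdz1 /= => /eqP N1.
  by rewrite N1 in pN.
have h1' := subset_leq_card SsubT.
have h2' := subset_leq_card TsubSB.
have h3' : (#|S :|: Bad| <= #|S| + #|Bad|)%N by rewrite cardsU leq_subr.
rewrite cT in h1' h2'.
rewrite -mulnn; lia.
Qed.
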